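(* Let $T$ be a directed tree in which the longest directed path has length $1$ (i.e. every vertex is a source or a sink), and let $d$ be the degree of $T$. Then $T$ has span at most $\lfloor d/2\rfloor+1$.
   Context: A directed tree is a DAG (directed acyclic graph) whose underlying undirected graph is a tree. A source (sink) is a vertex with no incoming (outgoing) edge. The degree of a vertex is its total number of incident edges; the degree of a graph is the maximum degree of its vertices. The length of a directed path is its number of edges. An upward-planar layered drawing of a DAG $G$ maps each vertex $v$ to a point in the plane whose y-coordinate $y(v)$ is an integer, and each edge $(u,v)$ (directed from tail $u$ to head $v$) to a strictly y-monotone curve going upward from $u$ to $v$ (so $y(u)<y(v)$), such that no two edges intersect except at common endpoints. The span of an edge $(u,v)$ in such a drawing $\Gamma$ is $y(v)-y(u)$; the span of $\Gamma$ is the maximum span of its edges; the span of an upward-planar DAG is the minimum span over all its upward-planar layered drawings (no embedding prescribed). *)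

(* Defs.v *)
From Stdlib Require Import Reals ZArith.
From mathcomp Require Import all_boot.

Set Implicit Arguments.
Unset Strict Implicit.
Unset Printing Implicit Defensive.

Section Defs.
Variable V : finType.

(* A directed graph on V is given by its (simple) edge relation E:
   E u v means there is an edge directed from tail u to head v. *)

Definition und (E : rel V) : rel V := fun x y => E x y || E y x.

(* Directed tree: loopless, no pair of opposite edges (so the underlying
   undirected graph is simple), and the underlying undirected graph is a tree,
   i.e. nonempty, connected, with exactly |V| - 1 edges. *)
Definition directed_tree (E : rel V) : Prop :=
  [/\ (forall x, ~~ E x x),
      (forall x y, E x y -> ~~ E y x),
      (0 < #|V|)%N,
      (forall x y, connect (und E) x y)
    & #|[set p : (V * V)%type | E p.1 p.2]| = (#|V| - 1)%N].

Definition longest_path_is_one (E : rel V) : Prop :=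
  (exists u v, E u v) /\ (forall u v w, E u v -> ~ E v w).

Definition vdeg (E : rel V) (v : V) : nat := #|[set u | und E v u]|.
Definition graph_degree (E : rel V) : nat := \max_(v : V) vdeg E v.

(* An upward-planar layered drawing: vertex v is drawn at (px v, y v) with
   y v an integer; edge (u,v) is drawn as the curve
   t |-> (cx u v t, cy u v t), t in [0,1], continuous, from the point of u
   to the point of v, strictly increasing in y; distinct vertices get distinct
   points; two distinct edges meet only at the point of a common endpoint. *)
Definition upward_planar_layered_drawing (E : rel V) (y : V -> Z)
  (px : V -> R) (cx cy : V -> V -> R -> R) : Prop :=
  [/\ (forall u v, (px u, IZR (y u)) = (px v, IZR (y v)) -> u = v),
      (forall u v, E u v ->
         [/\ continuity (cx u v), continuity (cy u v),
             cx u v R0 = px u /\ cy u v R0 = IZR (y u),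
             cx u v R1 = px v /\ cy u v R1 = IZR (y v)
           & forall s t, Rle R0 s -> Rlt s t -> Rle t R1 ->
               Rlt (cy u v s) (cy u v t)])
    & (forall u v u' v' s t, E u v -> E u' v' -> (u, v) <> (u', v') ->
         Rle R0 s -> Rle s R1 -> Rle R0 t -> Rle t R1 ->
         cx u v s = cx u' v' t -> cy u v s = cy u' v' t ->
         exists w, (w = u \/ w = v) /\ (w = u' \/ w = v') /\
                   cx u v s = px w /\ cy u v s = IZR (y w))].

Definition span_at_most (E : rel V) (y : V -> Z) (k : Z) : Prop :=
  forall u v, E u v -> (y v - y u <= k)%Z.

End Defs.

(* Main.v *)
Require Import Defs.
From Stdlib Require Import Reals ZArith Lra Lia.
From mathcomp Require Import all_boot zify.

Set Implicit Arguments.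
Unset Strict Implicit.
Unset Printing Implicit Defensive.

Local Open Scope R_scope.

Definition sinkI (n : nat) (l r : R) (i : nat) : R * R :=
  let u := (r - l) / (INR n + 1) in (l + (INR i + 1) * u, l + (INR i + 1) * u + u / 2).
Definition srcI (n : nat) (l r : R) (j : nat) : R * R :=
  let x := (l + r) / 2 in let s := (r - l)/2 in let q := s / (2 * (INR n + 1)) in
  let k := INR (j./2) in
  if odd j then (x - s/2 - k*q - q/2, x - s/2 - k*q) else (x + s/2 + k*q, x + s/2 + k*q + q/2).
Definition cornerF (l r : R) (j : nat) : R :=
  let x := (l+r)/2 in let s := (r-l)/2 in
  x + (if odd j then -1 else 1) * (s / (4 * (INR (j./2) + 1))).

Lemma INR_lt_le (i n : nat) : (i < n)%N -> INR i + 1 <= INR n.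
Proof. move=> H; rewrite -S_INR; apply: le_INR; apply/leP; exact H. Qed.

Lemma INR_ltR (i n : nat) : (i < n)%N -> INR i < INR n.
Proof. move=> H; apply: lt_INR; apply/ltP; exact H. Qed.

Lemma sinkI_in n l r i : l < r -> (i < n)%N ->
  l < (sinkI n l r i).1 < (sinkI n l r i).2 /\ (sinkI n l r i).2 < r.
Proof.
move=> Hlr Hi; rewrite /sinkI /=.
have Hn := INR_lt_le Hi; have H0 := pos_INR i.
set u := (r - l) / (INR n + 1).
have Hu : 0 < u by apply: Rdiv_lt_0_compat; lra.
have Hw : u * (INR n + 1) = r - l by rewrite /u; field; lra.
split; [split|]; nra.
Qed.

Lemma sinkI_disj n l r i i' : l < r -> (i < n)%N -> (i' < n)%N -> i <> i' ->
  (sinkI n l r i).2 < (sinkI n l r i').1 \/ (sinkI n l r i').2 < (sinkI n l r i).1.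
Proof.
move=> Hlr Hi Hi' Hne; rewrite /sinkI /=.
set u := (r - l) / (INR n + 1).
have Hn := INR_lt_le Hi.
have Hu : 0 < u by apply: Rdiv_lt_0_compat; have := pos_INR n; lra.
case: (ltngtP i i') => H; last by [].
- left; have := INR_lt_le H; nra.
- right; have := INR_lt_le H; nra.
Qed.

Lemma half_lt (j n : nat) : (j < n)%N -> (j./2 < n)%N.
Proof. move=> H; apply: leq_ltn_trans H; rewrite leq_half_double -addnn; lia. Qed.

Lemma srcI_in n l r j : l < r -> (j < n)%N ->
  let x := (l + r)/2 in let s := (r - l)/2 in
  let l' := (srcI n l r j).1 in let r' := (srcI n l r j).2 in
  l' < r' /\
  (if odd j then x - s < l' /\ r' <= x - s/2 else x + s/2 <= l' /\ r' < x + s).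
Proof.
move=> Hlr Hj x s l' r'; rewrite /l' /r' /srcI -/x -/s.
have Hk := INR_lt_le (half_lt Hj); have Hk0 := pos_INR (j./2).
set k := INR (j./2) in Hk Hk0 *.
have Hs : 0 < s by rewrite /s; lra.
set q := s / (2 * (INR n + 1)).
have Hq : 0 < q by apply: Rdiv_lt_0_compat; have := pos_INR n; lra.
have Hw : q * (2 * (INR n + 1)) = s by rewrite /q; field; have := pos_INR n; lra.
case: (odd j) => /=; split; try split; nra.
Qed.

Lemma corner_in l r j : l < r ->
  let x := (l + r)/2 in let s := (r - l)/2 in
  if odd j then x - s/4 <= cornerF l r j < x else x < cornerF l r j <= x + s/4.
Proof.
move=> Hlr x s; rewrite /cornerF -/x -/s.
have Hk0 := pos_INR (j./2); set k := INR (j./2) in Hk0 *.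
have Hs : 0 < s by rewrite /s; lra.
set A := s / (4 * (k + 1)).
have HA : 0 < A by apply: Rdiv_lt_0_compat; lra.
have HA2 : A * (4 * (k + 1)) = s by rewrite /A; field; lra.
case: (odd j); split; nra.
Qed.

Lemma srcI_disj n l r j j' : l < r -> (j < n)%N -> (j' < n)%N -> j <> j' ->
  (srcI n l r j).2 < (srcI n l r j').1 \/ (srcI n l r j').2 < (srcI n l r j).1.
Proof.
move=> Hlr Hj Hj' Hne.
have H1 := srcI_in Hlr Hj; have H2 := srcI_in Hlr Hj'.
move: H1 H2 => /=.
case Ho: (odd j); case Ho': (odd j'); move=> /= [H1 [H2 H3]] [H4 [H5 H6]]; try lra.
- have Hk : j./2 <> j'./2.
    move=> Hk; apply: Hne; rewrite -(odd_double_half j) -(odd_double_half j') Ho Ho' Hk //.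
  rewrite /srcI Ho Ho' /=.
  set x := (l + r)/2; set s := (r - l)/2.
  have Hs : 0 < s by rewrite /s; lra.
  set q := s / (2 * (INR n + 1)).
  have Hq : 0 < q by apply: Rdiv_lt_0_compat; have := pos_INR n; lra.
  case: (ltngtP (j./2) (j'./2)) => H; last by [].
  + right; have := INR_lt_le H; nra.
  + left; have := INR_lt_le H; nra.
- have Hk : j./2 <> j'./2.
    move=> Hk; apply: Hne; rewrite -(odd_double_half j) -(odd_double_half j') Ho Ho' Hk //.
  rewrite /srcI Ho Ho' /=.
  set x := (l + r)/2; set s := (r - l)/2.
  have Hs : 0 < s by rewrite /s; lra.
  set q := s / (2 * (INR n + 1)).
  have Hq : 0 < q by apply: Rdiv_lt_0_compat; have := pos_INR n; lra.
  case: (ltngtP (j./2) (j'./2)) => H; last by [].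
  + left; have := INR_lt_le H; nra.
  + right; have := INR_lt_le H; nra.
Qed.

Lemma srcI_order n l r j j' : l < r -> (j' < n)%N -> odd j = odd j' -> (j./2 < j'./2)%N ->
  if odd j then (srcI n l r j').2 < (srcI n l r j).1 /\ cornerF l r j < cornerF l r j'
  else (srcI n l r j).2 < (srcI n l r j').1 /\ cornerF l r j' < cornerF l r j.
Proof.
move=> Hlr Hj' Ho Hlt.
rewrite /srcI /cornerF -Ho.
have Hk := INR_lt_le Hlt; have Hk0 := pos_INR (j./2).
set k := INR (j./2) in Hk Hk0 *; set k' := INR (j'./2) in Hk *.
set x := (l + r)/2; set s := (r - l)/2.
have Hs : 0 < s by rewrite /s; lra.
set q := s / (2 * (INR n + 1)).
have Hq : 0 < q by apply: Rdiv_lt_0_compat; have := pos_INR n; lra.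
set A := s / (4 * (k + 1)); set A' := s / (4 * (k' + 1)).
have HA2 : A * (4 * (k + 1)) = s by rewrite /A; field; lra.
have HA2' : A' * (4 * (k' + 1)) = s by rewrite /A'; field; lra.
have HA' : 0 < A' by apply: Rdiv_lt_0_compat; lra.
have HAA : A' < A by nra.
case: (odd j); split.
all: simpl; nra.
Qed.

Definition mn z := (1 + z - Rabs (z - 1))/2.
Definition mx w := (w + Rabs w)/2.
Definition Xf (xt yt cc xh yh Y : R) :=
  xt + (cc - xt) * mn ((Y - yt) * / (yh - 1/2 - yt)) + (xh - cc) * mx (2*(Y - (yh - 1/2))).

Lemma Xf_lo xt yt cc xh yh Y : yt < yh - 1/2 -> Y <= yh - 1/2 ->
  Xf xt yt cc xh yh Y = xt + (cc - xt) * ((Y - yt) * / (yh - 1/2 - yt)).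
Proof.
move=> H1 H2; rewrite /Xf /mn /mx.
have Hz : (Y - yt) * / (yh - 1 / 2 - yt) <= 1.
  apply: (Rmult_le_reg_r (yh - 1/2 - yt)); first lra.
  rewrite Rmult_assoc Rinv_l; lra.
rewrite (Rabs_left1 (_ - 1)); last lra.
rewrite (Rabs_left1 (2 * _)); last lra.
field; lra.
Qed.

Lemma Xf_hi xt yt cc xh yh Y : yt < yh - 1/2 -> yh - 1/2 <= Y ->
  Xf xt yt cc xh yh Y = xh + (cc - xh) * (2 * (yh - Y)).
Proof.
move=> H1 H2; rewrite /Xf /mn /mx.
have Hz : 1 <= (Y - yt) * / (yh - 1 / 2 - yt).
  apply: (Rmult_le_reg_r (yh - 1/2 - yt)); first lra.
  rewrite Rmult_assoc Rinv_l; lra.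
rewrite (Rabs_pos_eq (_ - 1)); last lra.
rewrite (Rabs_pos_eq (2 * _)); last lra.
field; lra.
Qed.

Lemma Xf_lo_par xt yt cc xh yh Y : yt < yh - 1/2 -> yt <= Y <= yh - 1/2 ->
  exists t, 0 <= t <= 1 /\ Xf xt yt cc xh yh Y = xt + (cc - xt) * t /\
            Y = yt + (yh - 1/2 - yt) * t.
Proof.
move=> H1 H2; exists ((Y - yt) * / (yh - 1/2 - yt)); split; last split.
- split.
  + apply: Rmult_le_pos; [lra | apply: Rlt_le; apply: Rinv_0_lt_compat; lra].
  + apply: (Rmult_le_reg_r (yh - 1/2 - yt)); first lra.
    rewrite Rmult_assoc Rinv_l; lra.
- by rewrite Xf_lo //; lra.
- field; lra.
Qed.

Lemma Xf_hi_par xt yt cc xh yh Y : yt < yh - 1/2 -> yh - 1/2 <= Y <= yh ->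
  exists t, 0 <= t <= 1 /\ Xf xt yt cc xh yh Y = xh + (cc - xh) * t /\ Y = yh - t/2.
Proof.
move=> H1 H2; exists (2 * (yh - Y)); split; last split.
- lra.
- by rewrite Xf_hi //; lra.
- lra.
Qed.

Lemma cp_plus f g x : continuity_pt f x -> continuity_pt g x -> continuity_pt (fun t => f t + g t) x.
Proof. exact: continuity_pt_plus. Qed.
Lemma cp_minus f g x : continuity_pt f x -> continuity_pt g x -> continuity_pt (fun t => f t - g t) x.
Proof. exact: continuity_pt_minus. Qed.
Lemma cp_mult f g x : continuity_pt f x -> continuity_pt g x -> continuity_pt (fun t => f t * g t) x.
Proof. exact: continuity_pt_mult. Qed.
Lemma cp_const c x : continuity_pt (fun _ => c) x.
Proof. apply: continuity_pt_const; by []. Qed.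
Lemma cp_id x : continuity_pt (fun t => t) x.
Proof. apply: derivable_continuous_pt; apply: derivable_pt_id. Qed.
Lemma cp_abs f x : continuity_pt f x -> continuity_pt (fun t => Rabs (f t)) x.
Proof. move=> H; apply: (continuity_pt_comp f Rabs) => //; apply: Rcontinuity_abs. Qed.
Lemma cp_opp f x : continuity_pt f x -> continuity_pt (fun t => - f t) x.
Proof. exact: continuity_pt_opp. Qed.
Ltac cont := repeat first [ apply cp_minus | apply cp_opp | apply cp_plus | apply cp_mult
   | apply cp_abs | apply cp_id | apply cp_const ].

Lemma Xf_cont xt yt cc xh yh :
  continuity (fun t => Xf xt yt cc xh yh (yt + t * (yh - yt))).
Proof. move=> x; rewrite /Xf /mn /mx; unfold Rdiv; cont. Qed.

Lemma Yf_cont yt yh : continuity (fun t => yt + t * (yh - yt)).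
Proof. move=> x; cont. Qed.

Lemma seg_bounds a b t : 0 <= t <= 1 ->
  (a <= b -> a <= a + (b - a) * t <= b) /\ (b <= a -> b <= a + (b - a) * t <= a).
Proof. move=> Ht; split => H; split; nra. Qed.

Local Close Scope R_scope.

Section Tree.
Variable V : finType.
Variable E : rel V.
Hypothesis Htree : directed_tree E.
Hypothesis Hlp : longest_path_is_one E.
Variable root : V.
Hypothesis root_sink : forall u, ~~ E root u.

Definition reach (v : V) (n : nat) : bool :=
  [exists p : n.-tuple V, path (und E) root p && (last root p == v)].

Lemma reach_ex v : exists n, reach v n.
Proof.
case: Htree => _ _ _ Hc _.
have /connectP [p Hp Hl] := Hc root v.
exists (size p); apply/existsP; exists (in_tuple p) => /=.
by rewrite Hp -Hl eqxx.
Qed.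

Definition depth v := ex_minn (reach_ex v).

Lemma reachP v n : reach v n ->
  exists p, [/\ size p = n, path (und E) root p & last root p = v].
Proof. by case/existsP => t /andP [H1 /eqP H2]; exists (tval t); rewrite size_tuple. Qed.

Lemma reachI v p : path (und E) root p -> last root p = v -> reach v (size p).
Proof. by move=> H1 H2; apply/existsP; exists (in_tuple p) => /=; rewrite H1 H2 eqxx. Qed.

Lemma depth_min v n : reach v n -> depth v <= n.
Proof. rewrite /depth; case: ex_minnP => m _ H; exact: H. Qed.

Lemma depth_reach v : reach v (depth v).
Proof. rewrite /depth; by case: ex_minnP. Qed.

Lemma depth_root : depth root = 0.
Proof.
apply/eqP; rewrite -leqn0; apply: depth_min.
by have := @reachI root [::] erefl erefl.
Qed.

Lemma depth0 v : depth v = 0 -> v = root.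
Proof. move=> H; have := depth_reach v; rewrite H => /reachP [p [Hs _ Hl]].
by case: p Hs Hl. Qed.

Lemma depth_pos v : v != root -> 0 < depth v.
Proof. move=> Hv; rewrite lt0n; apply/eqP => H; by rewrite (depth0 H) eqxx in Hv. Qed.

Lemma depth_nbr u v : und E u v -> depth v <= (depth u).+1.
Proof.
move=> Huv; have /reachP [p [Hs Hp Hl]] := depth_reach u.
have H := @reachI v (rcons p v).
rewrite size_rcons Hs in H; apply: depth_min; apply: H.
  by rewrite rcons_path Hp Hl.
by rewrite last_rcons.
Qed.

Lemma par_ex v : v != root -> exists u, und E u v && (depth u == (depth v).-1).
Proof.
move=> Hv; have /reachP [p [Hs Hp Hl]] := depth_reach v.
case/lastP: p Hs Hp Hl => [|q x].
  by move=> _ _ /= H; rewrite H eqxx in Hv.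
rewrite size_rcons last_rcons rcons_path => Hs /andP [Hq Hx] Hxv.
exists (last root q); rewrite -Hxv Hx /=.
have H1 := depth_min (reachI Hq erefl).
have H2 := depth_nbr Hx. rewrite -Hxv in Hs. apply/eqP. lia.
Qed.

Definition par v := if [pick u | und E u v && (depth u == (depth v).-1)] is Some u then u else root.

Lemma par_spec v : v != root -> und E (par v) v /\ depth v = (depth (par v)).+1.
Proof.
move=> Hv; rewrite /par; case: pickP => [u /andP [H1 /eqP H2]|H].
  split => //; have := depth_pos Hv; lia.
by have [u Hu] := par_ex Hv; rewrite H in Hu.
Qed.

Lemma par_nbr v : v != root -> und E (par v) v.
Proof. by case/par_spec. Qed.
Lemma depth_par v : v != root -> depth v = (depth (par v)).+1.
Proof. by case/par_spec. Qed.

Definition gedge v := if E v (par v) then (v, par v) else (par v, v).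

Lemma all_parent u v : E u v ->
  ((u != root) && (par u == v)) || ((v != root) && (par v == u)).
Proof.
move=> Euv.
case: Htree => Hirr Hanti Hpos Hc Hcard.
set F := [set p : (V * V)%type | E p.1 p.2] in Hcard.
set S := [set v | v != root].
have cS : #|S| = (#|V| - 1)%N.
  have -> : S = [set~ root] by apply/setP => x; rewrite !inE.
  by rewrite cardsC1 subn1.
have Hinj : {in S &, injective gedge}.
  move=> x y; rewrite !inE => Hx Hy; rewrite /gedge.
  have dx := depth_par Hx; have dy := depth_par Hy.
  case: (E x _); case: (E y _) => -[] H1 H2 //.
    by rewrite H2 in dx; rewrite -H1 in dy; lia.
  by rewrite H1 in dx; rewrite -H2 in dy; lia.
have sub : gedge @: S \subset F.
  apply/subsetP => p /imsetP [z]; rewrite inE => Hz ->; rewrite inE /gedge.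
  have := par_nbr Hz; rewrite /und.
  by case: (boolP (E z (par z))) => //= _; rewrite orbF.
have eqGF : gedge @: S = F.
  apply/eqP; rewrite eqEcard sub /= Hcard (card_in_imset Hinj) cS leqnn //.
have : (u, v) \in gedge @: S by rewrite eqGF inE.
case/imsetP => z; rewrite inE /gedge => Hz.
case: (E z _) => -[] -> ->; by rewrite Hz eqxx ?orbT.
Qed.


Definition sinkb v := [forall u, ~~ E v u].

Lemma E_sink u v : E u v -> sinkb v.
Proof. move=> Huv; apply/forallP => w; apply/negP => Hvw; exact: (Hlp.2 u v w Huv Hvw). Qed.

Lemma E_src u v : E u v -> ~~ sinkb u.
Proof. by move=> Huv; apply/negP => /forallP /(_ v); rewrite Huv. Qed.

Lemma root_sinkb : sinkb root.
Proof. by apply/forallP. Qed.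

Lemma src_nonroot v : ~~ sinkb v -> v != root.
Proof. by apply: contra => /eqP ->; apply: root_sinkb. Qed.

Lemma par_sink c : c != root -> sinkb (par c) -> E c (par c) /\ ~~ sinkb c.
Proof.
move=> Hc Hs; have := par_nbr Hc; rewrite /und.
case/orP => H; last by split => //; apply: E_src H.
by move/forallP: Hs => /(_ c); rewrite H.
Qed.

Lemma par_src c : c != root -> ~~ sinkb (par c) -> E (par c) c /\ sinkb c.
Proof.
move=> Hc Hs; have := par_nbr Hc; rewrite /und.
case/orP => H; first by split => //; apply: E_sink H.
by rewrite (E_sink H) in Hs.
Qed.

Lemma depth_iter v n : n <= depth v -> depth (iter n par v) = depth v - n.
Proof.
elim: n => [|n IH] Hn /=; first by rewrite subn0.
have H1 := IH (ltnW Hn).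
have Hnr : iter n par v != root.
  apply/eqP => H; rewrite H depth_root in H1; lia.
rewrite (depth_par Hnr) in H1; lia.
Qed.

Lemma iter_nonroot v n : n < depth v -> iter n par v != root.
Proof.
move=> Hn; have H1 := depth_iter (ltnW Hn).
apply/eqP => H; rewrite H depth_root in H1; lia.
Qed.

Lemma iter_depth_root v : iter (depth v) par v = root.
Proof. apply: depth0; rewrite depth_iter //; lia. Qed.

Definition rset c := [set c' | (c' != root) && (par c' == par c) && (enum_rank c' < enum_rank c)].
Definition rank c := #|rset c|.
Definition chs a := [set c | (c != root) && (par c == a)].

Lemma rank_inj c c' : c != root -> c' != root -> par c = par c' -> rank c = rank c' -> c = c'.
Proof.
move=> Hc Hc' Hp Hr.
have key : forall x y, x != root -> y != root -> par x = par y ->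
   enum_rank x < enum_rank y -> rank x < rank y.
  move=> x y Hx Hy Hpxy Hlt; apply: proper_card; apply/properP; split.
    apply/subsetP => z; rewrite !inE => /andP [/andP [H1 H2] H3].
    rewrite H1 /= -Hpxy H2 /=; exact: ltn_trans H3 Hlt.
  exists x; rewrite !inE ?Hx ?Hpxy ?eqxx ?Hlt //= ltnn //.
case: (ltngtP (enum_rank c) (enum_rank c')) => H.
- by have := key _ _ Hc Hc' Hp H; rewrite Hr ltnn //.
- by have := key _ _ Hc' Hc (esym Hp) H; rewrite Hr ltnn //.
- exact: enum_rank_inj (val_inj H).
Qed.

Lemma rank_lt_card c : c != root -> rank c < #|chs (par c)|.
Proof.
move=> Hc; apply: proper_card; apply/properP; split.
  apply/subsetP => z; rewrite !inE => /andP [/andP [H1 H2] H3]; by rewrite H1 H2.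
exists c; rewrite !inE ?Hc ?eqxx //= ltnn //.
Qed.

Lemma rank_ltN c : c != root -> rank c < #|V|.
Proof. move=> Hc; apply: (leq_trans (rank_lt_card Hc)); exact: max_card. Qed.

Lemma chs_deg a : a != root -> #|chs a| <= (vdeg E a).-1.
Proof.
move=> Ha; rewrite /vdeg [X in _ <= X.-1](cardsD1 (par a)).
have -> : par a \in [set u | und E a u].
  by rewrite inE; have := par_nbr Ha; rewrite /und orbC.
rewrite /=; apply: subset_leq_card; apply/subsetP => z; rewrite !inE.
case/andP => Hz /eqP Hpz; apply/andP; split.
  apply/eqP => Hzp; have := depth_par Ha; have := depth_par Hz.
  rewrite Hpz -Hzp; lia.
by have := par_nbr Hz; rewrite Hpz.
Qed.

Lemma rank_half c : c != root -> ~~ sinkb (par c) ->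
  ((rank c)./2 + 1 <= (graph_degree E)./2)%N.
Proof.
move=> Hc Hs.
have Ha := src_nonroot Hs.
have H1 := rank_lt_card Hc; have H2 := chs_deg Ha.
have H3 : vdeg E (par c) <= graph_degree E by apply: leq_bigmax.
have H4 : (rank c).+2 <= graph_degree E by lia.
have := half_leq H4; rewrite /= addn1; done.
Qed.

Lemma src_parsink v : ~~ sinkb v -> sinkb (par v) /\ E v (par v).
Proof.
move=> Hs; have Hv := src_nonroot Hs; have := par_nbr Hv; rewrite /und.
case/orP => H; first by rewrite (E_sink H) in Hs.
by split => //; apply: E_sink H.
Qed.

Local Open Scope R_scope.

Definition Kn := ((graph_degree E)./2 + 1)%N.
Definition KR := INR Kn.

Lemma KR_ge1 : 1 <= KR.
Proof. rewrite /KR /Kn plus_INR /=; have := pos_INR ((graph_degree E)./2); lra. Qed.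

Definition child_lay (lr : R * R) (ya : Z) (a c : V) : (R * R) * Z :=
  if sinkb a then (sinkI #|V| lr.1 lr.2 (rank c), (ya - Z.of_nat Kn)%Z)
  else (srcI #|V| lr.1 lr.2 (rank c), (ya + 1 + Z.of_nat ((rank c)./2))%Z).

Fixpoint lay (n : nat) (v : V) : (R * R) * Z :=
  match n with
  | O => ((0, 1), 0%Z)
  | S m => if v == root then ((0, 1), 0%Z)
           else child_lay (lay m (par v)).1 (lay m (par v)).2 (par v) v
  end.

Definition LL v := (lay (depth v) v).1.1.
Definition RR v := (lay (depth v) v).1.2.
Definition yZ v := (lay (depth v) v).2.
Definition yR v := IZR (yZ v).
Definition XX v := if sinkb v then LL v else (LL v + RR v) / 2.
Definition cc c := cornerF (LL (par c)) (RR (par c)) (rank c).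

Lemma lay_root : lay (depth root) root = ((0, 1), 0%Z).
Proof. by rewrite depth_root. Qed.

Lemma lay_child c : c != root ->
  lay (depth c) c = child_lay (lay (depth (par c)) (par c)).1 (lay (depth (par c)) (par c)).2 (par c) c.
Proof. by move=> Hc; rewrite (depth_par Hc) /= (negbTE Hc). Qed.

Lemma lay_sink c : c != root -> sinkb (par c) ->
  LL c = (sinkI #|V| (LL (par c)) (RR (par c)) (rank c)).1 /\
  RR c = (sinkI #|V| (LL (par c)) (RR (par c)) (rank c)).2 /\
  yR c = yR (par c) - KR.
Proof.
move=> Hc Hs; rewrite /LL /RR /yR /yZ (lay_child Hc) /child_lay Hs /=.
split => //; split => //; rewrite minus_IZR /KR INR_IZR_INZ //.
Qed.

Lemma lay_src c : c != root -> ~~ sinkb (par c) ->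
  LL c = (srcI #|V| (LL (par c)) (RR (par c)) (rank c)).1 /\
  RR c = (srcI #|V| (LL (par c)) (RR (par c)) (rank c)).2 /\
  yR c = yR (par c) + 1 + INR ((rank c)./2).
Proof.
move=> Hc Hs; rewrite /LL /RR /yR /yZ (lay_child Hc) /child_lay (negbTE Hs) /=.
split => //; split => //; rewrite !plus_IZR INR_IZR_INZ //.
Qed.

Lemma LR_lt v : LL v < RR v.
Proof.
move: {-1}(depth v) (erefl (depth v)) => n; elim: n v => [|n IH] v Hd.
  by rewrite (depth0 Hd) /LL /RR lay_root /=; lra.
have Hv : v != root by apply/eqP => H; rewrite H depth_root in Hd.
have Hp := IH (par v) ltac:(rewrite (depth_par Hv) in Hd; lia).
have Hr := rank_ltN Hv.
case: (boolP (sinkb (par v))) => Hs.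
- have [-> [-> _]] := lay_sink Hv Hs; have := sinkI_in Hp Hr; lra.
- have [-> [-> _]] := lay_src Hv Hs; have := srcI_in Hp Hr; simpl; lra.
Qed.

Lemma nest c : c != root -> LL (par c) < LL c /\ RR c < RR (par c).
Proof.
move=> Hc; have Hp := LR_lt (par c); have Hr := rank_ltN Hc.
case: (boolP (sinkb (par c))) => Hs.
- have [-> [-> _]] := lay_sink Hc Hs; have := sinkI_in Hp Hr; lra.
- have [-> [-> _]] := lay_src Hc Hs; have := srcI_in Hp Hr; simpl.
  case: (odd _) => /=; lra.
Qed.

Lemma XX_in v : LL v <= XX v <= RR v.
Proof. have := LR_lt v; rewrite /XX; case: (sinkb v); lra. Qed.

Lemma XX_par_out c : c != root -> XX (par c) < LL c \/ RR c < XX (par c).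
Proof.
move=> Hc; have Hp := LR_lt (par c); have Hr := rank_ltN Hc.
rewrite /XX; case: (boolP (sinkb (par c))) => Hs.
- have [-> [-> _]] := lay_sink Hc Hs; have := sinkI_in Hp Hr; lra.
- have [-> [-> _]] := lay_src Hc Hs; have := srcI_in Hp Hr; simpl.
  case: (odd _) => /=; lra.
Qed.

Lemma sib_disj c c' : c != root -> c' != root -> par c = par c' -> c <> c' ->
  RR c < LL c' \/ RR c' < LL c.
Proof.
move=> Hc Hc' Hpp Hne; have Hp := LR_lt (par c); have Hr := rank_ltN Hc; have Hr' := rank_ltN Hc'.
have Hrk : rank c <> rank c' by move=> H; apply: Hne; apply: rank_inj.
case: (boolP (sinkb (par c))) => Hs.
- have [-> [-> _]] := lay_sink Hc Hs; have Hs' := Hs; rewrite Hpp in Hs'.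
  have [-> [-> _]] := lay_sink Hc' Hs'; rewrite -Hpp; exact: sinkI_disj.
- have [-> [-> _]] := lay_src Hc Hs; have Hs' := Hs; rewrite Hpp in Hs'.
  have [-> [-> _]] := lay_src Hc' Hs'; rewrite -Hpp; exact: srcI_disj.
Qed.

Definition sA a := (RR a - LL a) / 2.

Lemma src_pos c : c != root -> ~~ sinkb (par c) ->
  let a := par c in
  XX a = LL a + sA a /\ 0 < sA a /\
  if odd (rank c) then
    LL a < LL c /\ RR c <= XX a - sA a / 2 /\ XX a - sA a / 4 <= cc c < XX a
  else XX a + sA a / 2 <= LL c /\ RR c < RR a /\ XX a < cc c <= XX a + sA a / 4.
Proof.
move=> Hc Hs /=; have Hp := LR_lt (par c); have Hr := rank_ltN Hc.
have [HL [HR _]] := lay_src Hc Hs.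
have H1 := srcI_in Hp Hr; have H2 := corner_in (rank c) Hp.
rewrite /XX (negbTE Hs) /sA /cc HL HR; simpl in H1, H2 |- *.
move: H1 H2; case: (odd _) => /= H1 H2; repeat split; lra.
Qed.

Lemma src_order c c' : c != root -> c' != root -> ~~ sinkb (par c) -> par c = par c' ->
  odd (rank c) = odd (rank c') -> ((rank c)./2 < (rank c')./2)%N ->
  if odd (rank c) then RR c' < LL c /\ cc c < cc c'
  else RR c < LL c' /\ cc c' < cc c.
Proof.
move=> Hc Hc' Hs Hpp Ho Hlt.
have Hp := LR_lt (par c); have Hr' := rank_ltN Hc'.
have [HL [HR _]] := lay_src Hc Hs.
have Hs' := Hs; rewrite Hpp in Hs'.
have [HL' [HR' _]] := lay_src Hc' Hs'.
rewrite HL HR HL' HR' /cc -Hpp.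
exact: srcI_order.
Qed.

Lemma y_sinkpar c : c != root -> sinkb (par c) -> yR c = yR (par c) - KR.
Proof. by move=> Hc Hs; have [_ [_ ->]] := lay_sink Hc Hs. Qed.

Lemma y_srcpar c : c != root -> ~~ sinkb (par c) -> yR c = yR (par c) + 1 + INR ((rank c)./2).
Proof. by move=> Hc Hs; have [_ [_ ->]] := lay_src Hc Hs. Qed.

Lemma y_src_bound c : c != root -> ~~ sinkb (par c) ->
  yR c <= yR (par (par c)) - 1.
Proof.
move=> Hc Hs; have Ha := src_nonroot Hs.
have [Hss _] := src_parsink Hs.
rewrite (y_srcpar Hc Hs) (y_sinkpar Ha Hss).
have H := rank_half Hc Hs.
have : (INR ((rank c)./2) + 1 <= INR ((graph_degree E)./2)).
  rewrite -S_INR; apply: le_INR; apply/leP; lia.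
rewrite /KR /Kn plus_INR /=; lra.
Qed.

Definition TT v := if sinkb v then yR v else yR (par v) - 1.

Lemma TT_mono c : c != root -> TT c <= TT (par c).
Proof.
move=> Hc; rewrite /TT.
case: (boolP (sinkb (par c))) => Hs.
- have [_ Hc'] := par_sink Hc Hs; rewrite (negbTE Hc'); lra.
- have [_ Hc'] := par_src Hc Hs; rewrite Hc'; exact: y_src_bound.
Qed.

Lemma iter_nest v n : (n <= depth v)%N ->
  LL (iter n par v) <= LL v /\ RR v <= RR (iter n par v) /\ TT v <= TT (iter n par v).
Proof.
elim: n => [|n IH] Hn /=; first lra.
have [H1 [H2 H3]] := IH (ltnW Hn).
have Hnr := iter_nonroot Hn.
have [H4 H5] := nest Hnr; have H6 := TT_mono Hnr.
repeat split; lra.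
Qed.

Lemma depth_disj a b : depth a = depth b -> a <> b -> RR a < LL b \/ RR b < LL a.
Proof.
move: {-1}(depth a) (erefl (depth a)) => n; elim: n a b => [|n IH] a b Ha Hb Hne.
  by rewrite (depth0 Ha) (depth0 (esym Hb)) in Hne.
have Hna : a != root by apply/eqP => H; rewrite H depth_root in Ha.
have Hnb : b != root by apply/eqP => H; rewrite H depth_root in Hb.
case: (eqVneq (par a) (par b)) => Hp.
  exact: sib_disj.
have Hda := depth_par Hna; have Hdb := depth_par Hnb.
move/eqP: Hp => Hp.
have := IH (par a) (par b) ltac:(lia) ltac:(lia) Hp.
have := nest Hna; have := nest Hnb; have := LR_lt a; have := LR_lt b; lra.
Qed.

Definition tl c := if sinkb (par c) then c else par c.
Definition hd c := if sinkb (par c) then par c else c.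
Definition ccol c := if sinkb (par c) then XX c else cc c.
Definition Xc c Y := Xf (XX (tl c)) (yR (tl c)) (ccol c) (XX (hd c)) (yR (hd c)) Y.
Definition onC c X Y := yR (tl c) <= Y <= yR (hd c) /\ X = Xc c Y.

Lemma span_pos c : c != root -> yR (tl c) < yR (hd c) - 1/2.
Proof.
move=> Hc; rewrite /tl /hd; have := KR_ge1.
case: (boolP (sinkb (par c))) => Hs.
- rewrite (y_sinkpar Hc Hs); lra.
- rewrite (y_srcpar Hc Hs); have := pos_INR ((rank c)./2); lra.
Qed.

Lemma on_sinkpar c X Y : c != root -> sinkb (par c) -> onC c X Y ->
  (yR c <= Y <= yR (par c) - 1/2 /\ X = XX c) \/
  (exists t, 0 <= t <= 1 /\ X = XX (par c) + (XX c - XX (par c)) * t /\ Y = yR (par c) - t/2).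
Proof.
move=> Hc Hs [HY HX]; have Hsp := span_pos Hc.
move: HY HX Hsp; rewrite /Xc /tl /hd /ccol Hs => HY HX Hsp.
case: (Rle_lt_dec Y (yR (par c) - 1/2)) => HY2.
- left; split; first lra.
  have [t [Ht [H1 _]]] := @Xf_lo_par (XX c) (yR c) (XX c) (XX (par c)) (yR (par c)) Y Hsp ltac:(lra).
  by rewrite HX H1; ring.
- right; have [t [Ht [H1 H2]]] := @Xf_hi_par (XX c) (yR c) (XX c) (XX (par c)) (yR (par c)) Y Hsp ltac:(lra).
  by exists t; rewrite HX H1.
Qed.

Lemma on_srcpar c X Y : c != root -> ~~ sinkb (par c) -> onC c X Y ->
  (exists t, 0 <= t <= 1 /\ X = XX (par c) + (cc c - XX (par c)) * t /\
             Y = yR (par c) + (yR c - 1/2 - yR (par c)) * t) \/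
  (exists t, 0 <= t <= 1 /\ X = XX c + (cc c - XX c) * t /\ Y = yR c - t/2).
Proof.
move=> Hc Hs [HY HX]; have Hsp := span_pos Hc.
move: HY HX Hsp; rewrite /Xc /tl /hd /ccol (negbTE Hs) => HY HX Hsp.
case: (Rle_lt_dec Y (yR c - 1/2)) => HY2.
- left; have [t [Ht [H1 H2]]] := @Xf_lo_par (XX (par c)) (yR (par c)) (cc c) (XX c) (yR c) Y Hsp ltac:(lra).
  by exists t; rewrite HX H1.
- right; have [t [Ht [H1 H2]]] := @Xf_hi_par (XX (par c)) (yR (par c)) (cc c) (XX c) (yR c) Y Hsp ltac:(lra).
  by exists t; rewrite HX H1.
Qed.

Lemma XX_sink v : sinkb v -> XX v = LL v.
Proof. by rewrite /XX => ->. Qed.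

Lemma onC_cont c X Y : c != root -> onC c X Y ->
  LL (par c) <= X <= RR (par c) /\ Y <= TT (par c).
Proof.
move=> Hc Hon; have [Hn1 Hn2] := nest Hc; have Hxa := XX_in (par c); have Hxc := XX_in c.
have HLc := LR_lt c.
case: (boolP (sinkb (par c))) => Hs.
- rewrite /TT Hs.
  case: (on_sinkpar Hc Hs Hon) => [[HY HX]|[t [Ht [HX HY]]]].
  + lra.
  + have [B1 B2] := seg_bounds (XX (par c)) (XX c) Ht; rewrite -HX in B1 B2.
    case: (Rle_lt_dec (XX (par c)) (XX c)) => H.
    * have := B1 H; lra.
    * have := B2 (Rlt_le _ _ H); lra.
- have Hsb := y_src_bound Hc Hs.
  have [Ha Hcs] := src_parsink Hs.
  rewrite /TT (negbTE Hs).
  have [_ Hsc] := par_src Hc Hs.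
  have [HXa [HsA Hpos]] := src_pos Hc Hs.
  have HccIn : LL (par c) <= cc c <= RR (par c).
    move: Hpos; rewrite /sA in HXa HsA *; case: (odd _); lra.
  case: (on_srcpar Hc Hs Hon) => [[t [Ht [HX HY]]]|[t [Ht [HX HY]]]].
  + have [B1 B2] := seg_bounds (XX (par c)) (cc c) Ht; rewrite -HX in B1 B2.
    split; last by have := span_pos Hc; rewrite /tl /hd (negbTE Hs); nra.
    case: (Rle_lt_dec (XX (par c)) (cc c)) => H.
    * have := B1 H; lra.
    * have := B2 (Rlt_le _ _ H); lra.
  + have [B1 B2] := seg_bounds (XX c) (cc c) Ht; rewrite -HX in B1 B2.
    split; last lra.
    case: (Rle_lt_dec (XX c) (cc c)) => H.
    * have := B1 H; lra.
    * have := B2 (Rlt_le _ _ H); lra.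
Qed.

Lemma seg_between a b t : 0 <= t <= 1 -> Rmin a b <= a + (b - a) * t <= Rmax a b.
Proof.
move=> Ht; have [B1 B2] := seg_bounds a b Ht.
rewrite /Rmin /Rmax; case: (Rle_dec a b) => H.
- exact: B1.
- apply: B2; lra.
Qed.

Lemma src_facts c : c != root -> ~~ sinkb (par c) ->
  let a := par c in let s := sA a in
  0 < s /\ LL c < RR c /\ XX c = LL c /\ yR c = yR a + 1 + INR ((rank c)./2) /\
  if odd (rank c) then LL a < LL c /\ RR c <= XX a - s/2 /\ XX a - s/4 <= cc c < XX a
  else XX a + s/2 <= LL c /\ RR c < RR a /\ XX a < cc c <= XX a + s/4.
Proof.
move=> Hc Hs /=; have [HXa [HsA Hpos]] := src_pos Hc Hs.
have [_ Hsc] := par_src Hc Hs.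
split => //; split; first exact: LR_lt.
split; first exact: XX_sink.
split; first exact: y_srcpar.
exact: Hpos.
Qed.

Lemma FactB c X Y : c != root -> ~~ sinkb (par c) -> onC c X Y -> LL c <= X <= RR c ->
  exists t, 0 <= t <= 1 /\ X = XX c + (cc c - XX c) * t /\ Y = yR c - t/2.
Proof.
move=> Hc Hs Hon HX.
case: (on_srcpar Hc Hs Hon) => // [[t [Ht [HX1 HY1]]]].
have := seg_between (XX (par c)) (cc c) Ht; rewrite -HX1.
have := src_facts Hc Hs; rewrite /= /Rmin /Rmax.
case: (odd _); case: (Rle_dec _ _); lra.
Qed.

Lemma cc_out c : c != root -> ~~ sinkb (par c) -> cc c < LL c \/ RR c < cc c.
Proof. move=> Hc Hs; have := src_facts Hc Hs; rewrite /=; case: (odd _); lra. Qed.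

Lemma FactD c X Y : c != root -> ~~ sinkb (par c) -> onC c X Y -> X = XX (par c) ->
  Y = yR (par c).
Proof.
move=> Hc Hs Hon HX.
have Hf := src_facts Hc Hs; simpl in Hf.
case: (on_srcpar Hc Hs Hon) => [[t [Ht [HX1 HY1]]]|[t [Ht [HX1 HY1]]]].
- have Ht0 : (cc c - XX (par c)) * t = 0 by lra.
  have Hne : cc c - XX (par c) <> 0 by move: Hf; case: (odd _); lra.
  case: (Rmult_integral _ _ Ht0) => H; first lra.
  rewrite H in HY1; lra.
- have := seg_between (XX c) (cc c) Ht; rewrite -HX1.
  move: Hf; rewrite /Rmin /Rmax; case: (odd _); case: (Rle_dec _ _); lra.
Qed.

Lemma FactC c c' X Y : c != root -> c' != root -> par c = par c' -> c <> c' ->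
  onC c X Y -> LL c' <= X <= RR c' -> TT c' < Y.
Proof.
move=> Hc Hc' Hpp Hne Hon HX.
have Hd := sib_disj Hc Hc' Hpp Hne.
case: (boolP (sinkb (par c))) => Hs.
- have Hs' : sinkb (par c') by rewrite -Hpp.
  have [_ Hsc'] := par_sink Hc' Hs'.
  rewrite /TT (negbTE Hsc') -Hpp.
  case: (on_sinkpar Hc Hs Hon) => [[HY HX1]|[t [Ht [HX1 HY1]]]].
  + have := XX_in c; lra.
  + lra.
- have Hs' : ~~ sinkb (par c') by rewrite -Hpp.
  have [_ Hsc'] := par_src Hc' Hs'.
  rewrite /TT Hsc'.
  have Hf := src_facts Hc Hs; have Hf' := src_facts Hc' Hs'.
  simpl in Hf, Hf'; rewrite -Hpp in Hf'.
  case: (on_srcpar Hc Hs Hon) => [[t [Ht [HX1 HY1]]]|[t [Ht [HX1 HY1]]]].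
  + have := seg_between (XX (par c)) (cc c) Ht; rewrite -HX1.
    move: Hf Hf'; rewrite /Rmin /Rmax; case: (odd (rank c)); case: (odd (rank c'));
      case: (Rle_dec _ _); lra.
  + have := seg_between (XX c) (cc c) Ht; rewrite -HX1 => Hb.
    have Hrk : rank c <> rank c' by move=> H; apply: Hne; apply: rank_inj.
    case Ho: (odd (rank c)); case Ho': (odd (rank c')); rewrite Ho Ho' in Hf Hf'.
    *
      have Hk : (rank c)./2 <> (rank c')./2.
        move=> Hk; apply: Hrk; rewrite -(odd_double_half (rank c)) -(odd_double_half (rank c')) Ho Ho' Hk //.
      case: (ltngtP ((rank c)./2) ((rank c')./2)) => Hlt; last by [].
      -- have := src_order Hc Hc' Hs Hpp (etrans Ho (esym Ho')) Hlt; rewrite Ho.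
         move: Hb; rewrite /Rmin /Rmax; case: (Rle_dec _ _); lra.
      -- have := INR_lt_le Hlt; lra.
    * move: Hb; rewrite /Rmin /Rmax; case: (Rle_dec _ _); lra.
    * move: Hb; rewrite /Rmin /Rmax; case: (Rle_dec _ _); lra.
    * have Hk : (rank c)./2 <> (rank c')./2.
        move=> Hk; apply: Hrk; rewrite -(odd_double_half (rank c)) -(odd_double_half (rank c')) Ho Ho' Hk //.
      case: (ltngtP ((rank c)./2) ((rank c')./2)) => Hlt; last by [].
      -- have := src_order Hc Hc' Hs Hpp (etrans Ho (esym Ho')) Hlt; rewrite Ho.
         move: Hb; rewrite /Rmin /Rmax; case: (Rle_dec _ _); lra.
      -- have := INR_lt_le Hlt; lra.
Qed.

Lemma src_side c X Y : c != root -> ~~ sinkb (par c) -> onC c X Y ->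
  if odd (rank c) then X <= XX (par c) else XX (par c) <= X.
Proof.
move=> Hc Hs Hon; have Hf := src_facts Hc Hs; simpl in Hf.
case: (on_srcpar Hc Hs Hon) => [[t [Ht [HX1 HY1]]]|[t [Ht [HX1 HY1]]]].
- have := seg_between (XX (par c)) (cc c) Ht; rewrite -HX1.
  move: Hf; rewrite /Rmin /Rmax; case: (odd _); case: (Rle_dec _ _); lra.
- have := seg_between (XX c) (cc c) Ht; rewrite -HX1.
  move: Hf; rewrite /Rmin /Rmax; case: (odd _); case: (Rle_dec _ _); lra.
Qed.

Lemma onC_Y c X Y : onC c X Y -> yR (tl c) <= Y <= yR (hd c).
Proof. by case. Qed.

Lemma sib_src_aux c c2 X Y : c != root -> c2 != root -> par c = par c2 -> ~~ sinkb (par c) ->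
  odd (rank c) = odd (rank c2) -> ((rank c)./2 < (rank c2)./2)%N ->
  onC c X Y -> onC c2 X Y -> X = XX (par c) /\ Y = yR (par c).
Proof.
move=> Hc Hc2 Hpp Hs Ho Hlt Hon Hon2.
have Hs2 : ~~ sinkb (par c2) by rewrite -Hpp.
have Hf := src_facts Hc Hs; have Hf2 := src_facts Hc2 Hs2; simpl in Hf, Hf2.
rewrite -Hpp -Ho in Hf2.
have Hord := src_order Hc Hc2 Hs Hpp Ho Hlt.
have Hk := INR_lt_le Hlt.
have HYc : Y <= yR c by have := onC_Y Hon; rewrite /hd (negbTE Hs); lra.
have Hk0 := pos_INR ((rank c)./2).
case: (on_srcpar Hc2 Hs2 Hon2) => [[t2 [Ht2 [HX2 HY2]]]|[t2 [Ht2 [HX2 HY2]]]]; last first.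
  move: Hf Hf2; case: (odd _); lra.
rewrite -Hpp in HX2 HY2.
case: (on_srcpar Hc Hs Hon) => [[t [Ht [HX1 HY1]]]|[t [Ht [HX1 HY1]]]].
- set A := cc c - XX (par c) in HX1; set A2 := cc c2 - XX (par c) in HX2.
  set D := yR c - 1/2 - yR (par c) in HY1; set D2 := yR c2 - 1/2 - yR (par c) in HY2.
  have E1 : A * t = A2 * t2 by lra.
  have E2 : D * t = D2 * t2 by lra.
  have E3 : (A * D2 - A2 * D) * t = 0.
    have -> : (A * D2 - A2 * D) * t = D2 * (A * t) - A2 * (D * t) by ring.
    rewrite E1 E2; ring.
  have Hne : A * D2 - A2 * D <> 0.
    rewrite /A /A2 /D /D2; move: Hf Hf2 Hord; case: (odd _) => Hf Hf2 Hord; nra.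
  case: (Rmult_integral _ _ E3) => H; first by [].
  rewrite H in HX1 HY1; split; lra.
- have := seg_between (XX c) (cc c) Ht; rewrite -HX1.
  have := seg_between (XX (par c)) (cc c2) Ht2; rewrite -HX2.
  move: Hf Hf2 Hord; rewrite /Rmin /Rmax; case: (odd _) => Hf Hf2 Hord;
  do 2 case: (Rle_dec _ _); lra.
Qed.

Lemma sib_cross c c2 X Y : c != root -> c2 != root -> par c = par c2 -> c <> c2 ->
  onC c X Y -> onC c2 X Y -> X = XX (par c) /\ Y = yR (par c).
Proof.
move=> Hc Hc2 Hpp Hne Hon Hon2.
have Hd := sib_disj Hc Hc2 Hpp Hne.
have Hi := XX_in c; have Hi2 := XX_in c2.
case: (boolP (sinkb (par c))) => Hs.
- have Hs2 : sinkb (par c2) by rewrite -Hpp.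
  case: (on_sinkpar Hc Hs Hon) => [[HY HX1]|[t [Ht [HX1 HY1]]]];
  case: (on_sinkpar Hc2 Hs2 Hon2) => [[HY2 HX2]|[t2 [Ht2 [HX2 HY2]]]];
  rewrite -?Hpp in HY2 HX2.
  + lra.
  + have Ht2' : t2 = 1 by lra.
    rewrite Ht2' in HX2; lra.
  + have Ht' : t = 1 by lra.
    rewrite Ht' in HX1; lra.
  + have Htt : t = t2 by lra.
    rewrite -Htt in HX2.
    have E3 : (XX c - XX c2) * t = 0 by lra.
    case: (Rmult_integral _ _ E3) => H; first lra.
    rewrite H in HX1 HY1; split; lra.
- have Hs2 : ~~ sinkb (par c2) by rewrite -Hpp.
  have Hrk : rank c <> rank c2 by move=> H; apply: Hne; apply: rank_inj.
  case: (boolP (odd (rank c) == odd (rank c2))) => Ho.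
  + move/eqP: Ho => Ho.
    have Hk : (rank c)./2 <> (rank c2)./2.
      move=> Hk; apply: Hrk; rewrite -(odd_double_half (rank c)) -(odd_double_half (rank c2)) Ho Hk //.
    case: (ltngtP ((rank c)./2) ((rank c2)./2)) => Hlt; last by [].
    * exact: sib_src_aux Hc Hc2 Hpp Hs Ho Hlt Hon Hon2.
    * rewrite Hpp; exact: sib_src_aux Hc2 Hc (esym Hpp) Hs2 (esym Ho) Hlt Hon2 Hon.
  + have S1 := src_side Hc Hs Hon; have S2 := src_side Hc2 Hs2 Hon2.
    rewrite -Hpp in S2.
    have HX : X = XX (par c).
      move: Ho S1 S2; case: (odd (rank c)); case: (odd (rank c2)) => //= _; lra.
    split => //; exact: FactD Hc Hs Hon HX.
Qed.

Lemma cross_main c c2 X Y : c != root -> c2 != root -> c <> c2 ->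
  (depth (par c) <= depth (par c2))%N -> onC c X Y -> onC c2 X Y ->
  exists w, (w = c \/ w = par c) /\ (w = c2 \/ w = par c2) /\ X = XX w /\ Y = yR w.
Proof.
move=> Hc Hc2 Hne Hdep Hon Hon2.
have [HI1 HT1] := onC_cont Hc Hon; have [HI2 HT2] := onC_cont Hc2 Hon2.
set n := (depth (par c2) - depth (par c))%N.
have Hn : (n <= depth (par c2))%N by rewrite /n; lia.
have [N1 [N2 N3]] := iter_nest Hn.
have Hdb0 : depth (iter n par (par c2)) = depth (par c) by rewrite depth_iter // /n; lia.
case: (eqVneq (iter n par (par c2)) (par c)) => Hb0; last first.
  have := depth_disj Hdb0 (elimN eqP Hb0); lra.
clear Hdb0; move: Hn N1 N2 N3 Hb0; case: n => [|m] Hn N1 N2 N3 Hb0.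
  simpl in Hb0.
  have [HX HY] := sib_cross Hc Hc2 (esym Hb0) Hne Hon Hon2.
  exists (par c); split; [by right | split; [by right; rewrite Hb0 | by []]].
have Hm : (m < depth (par c2))%N by lia.
clear Hn N1 N2 N3.
have Hcp : iter m par (par c2) != root by apply: iter_nonroot.
have Hpcp : par (iter m par (par c2)) = par c by rewrite -Hb0.
have [M1 [M2 M3]] := iter_nest (ltnW Hm).
case: (eqVneq (iter m par (par c2)) c) => Hcc; last first.
  have := FactC Hc Hcp (esym Hpcp) (fun H => elimN eqP Hcc (esym H)) Hon ltac:(lra); lra.
rewrite Hcc in M1 M2 M3.
clear Hb0 Hcp Hpcp.
case: (boolP (sinkb (par c))) => Hs.
- have [_ Hcs] := par_sink Hc Hs.
  case: (on_sinkpar Hc Hs Hon) => [[HY HX1]|[t [Ht [HX1 HY1]]]]; last first.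
    move: M3 HT2; rewrite /TT (negbTE Hcs) => M3 HT2; lra.
  move: Hm Hcc; case: m => [|m'] Hm Hcc.
  + simpl in Hcc.
    have Hs2 : ~~ sinkb (par c2) by rewrite Hcc.
    have HY2 := FactD Hc2 Hs2 Hon2 ltac:(rewrite Hcc; exact HX1).
    exists c; split; [by left | split; [by right; rewrite Hcc | split => //]].
    by rewrite HY2 Hcc.
  + have Hm' : (m' < depth (par c2))%N by lia.
    have Hcpp : iter m' par (par c2) != root by apply: iter_nonroot.
    have [P1 [P2 P3]] := iter_nest (ltnW Hm').
    have Hpcpp : par (iter m' par (par c2)) = c by rewrite -Hcc.
    have := XX_par_out Hcpp; rewrite Hpcpp; lra.
- have [_ Hcs] := par_src Hc Hs.
  have [t [Ht [HX1 HY1]]] := FactB Hc Hs Hon ltac:(lra).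
  move: Hm Hcc; case: m => [|m'] Hm Hcc.
  + simpl in Hcc.
    have Hs2 : sinkb (par c2) by rewrite Hcc.
    have Hco := cc_out Hc Hs.
    have Hi2 := XX_in c2; have [Nc1 Nc2] := nest Hc2; rewrite Hcc in Nc1 Nc2.
    case: (on_sinkpar Hc2 Hs2 Hon2) => [[HY2 HX2]|[t2 [Ht2 [HX2 HY2]]]];
      rewrite Hcc in HY2 HX2.
    * have Ht1 : t = 1 by lra.
      rewrite Ht1 in HX1; lra.
    * have Htt : t2 = t by lra.
      rewrite Htt in HX2.
      have E3 : (cc c - XX c2) * t = 0 by lra.
      case: (Rmult_integral _ _ E3) => H; first lra.
      rewrite H in HX1 HY1.
      exists c; split; [by left | split; [by right; rewrite Hcc | split; lra]].
  + have Hm' : (m' < depth (par c2))%N by lia.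
    have Hcpp : iter m' par (par c2) != root by apply: iter_nonroot.
    have [P1 [P2 P3]] := iter_nest (ltnW Hm').
    have Hpcpp : par (iter m' par (par c2)) = c by rewrite -Hcc.
    have Hs'' : sinkb (par (iter m' par (par c2))) by rewrite Hpcpp.
    have [_ Hcs''] := par_sink Hcpp Hs''.
    move: P3 HT2; rewrite /TT (negbTE Hcs'') Hpcpp => P3 HT2; lra.
Qed.

Lemma XX_inj_aux u v : (depth u <= depth v)%N -> XX u = XX v -> u = v.
Proof.
move=> Hd HX.
set n := (depth v - depth u)%N.
have Hn : (n <= depth v)%N by rewrite /n; lia.
have [N1 [N2 N3]] := iter_nest Hn.
have Hdb0 : depth (iter n par v) = depth u by rewrite depth_iter // /n; lia.
have Hiu := XX_in u; have Hiv := XX_in v.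
case: (eqVneq (iter n par v) u) => Hb0; last first.
  have := depth_disj Hdb0 (elimN eqP Hb0); lra.
clear Hdb0; move: Hn N1 N2 N3 Hb0; case: n => [|m] Hn N1 N2 N3 Hb0.
  by [].
have Hm : (m < depth v)%N by lia.
have Hcp : iter m par v != root by apply: iter_nonroot.
have [M1 [M2 M3]] := iter_nest (ltnW Hm).
have := XX_par_out Hcp; simpl in Hb0; rewrite Hb0; lra.
Qed.

Lemma XX_inj u v : XX u = XX v -> u = v.
Proof.
move=> HX; case: (leqP (depth u) (depth v)) => H.
- exact: XX_inj_aux.
- apply: esym; apply: XX_inj_aux; [exact: ltnW | by []].
Qed.

Definition chld (u v : V) := if (u != root) && (par u == v) then u else v.

Lemma chld_spec u v : E u v ->
  let c := chld u v in c != root /\ tl c = u /\ hd c = v /\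
  ((c = u /\ par c = v) \/ (c = v /\ par c = u)).
Proof.
move=> Euv /=; rewrite /chld.
case: (boolP ((u != root) && (par u == v))) => H.
- case/andP: H => Hu /eqP Hp.
  have Hs : sinkb (par u) by rewrite Hp; exact: E_sink Euv.
  by rewrite /tl /hd Hs Hp; split => //; split => //; split => //; left.
- have := all_parent Euv; rewrite (negbTE H) /= => /andP [Hv /eqP Hp].
  have Hs : ~~ sinkb (par v) by rewrite Hp; exact: E_src Euv.
  by rewrite /tl /hd (negbTE Hs) Hp; split => //; split => //; split => //; right.
Qed.

Lemma edge_span u v : E u v -> yR v - yR u <= KR.
Proof.
move=> Euv; have [Hc [Htl [Hhd Hor]]] := chld_spec Euv.
set c := chld u v in Hc Htl Hhd Hor.
case: (boolP (sinkb (par c))) => Hs.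
- rewrite /tl Hs in Htl; rewrite /hd Hs in Hhd.
  rewrite -Htl -Hhd (y_sinkpar Hc Hs); lra.
- rewrite /tl (negbTE Hs) in Htl; rewrite /hd (negbTE Hs) in Hhd.
  rewrite -Htl -Hhd (y_srcpar Hc Hs).
  have H := rank_half Hc Hs.
  have : (INR ((rank c)./2) + 1 <= INR ((graph_degree E)./2)).
    rewrite -S_INR; apply: le_INR; apply/leP; lia.
  rewrite /KR /Kn plus_INR /=; lra.
Qed.

Definition cyd (u v : V) (t : R) := yR u + t * (yR v - yR u).
Definition cxd (u v : V) (t : R) := Xc (chld u v) (cyd u v t).

Lemma drawing_ok : upward_planar_layered_drawing E yZ XX cxd cyd.
Proof.
split.
- move=> u v [H1 _]; exact: XX_inj.
- move=> u v Euv; have [Hc [Htl [Hhd Hor]]] := chld_spec Euv.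
  have Hsp := span_pos Hc; rewrite Htl Hhd in Hsp.
  rewrite /cxd /cyd /Xc Htl Hhd.
  split.
  + exact: Xf_cont.
  + exact: Yf_cont.
  + rewrite Rmult_0_l Rplus_0_r Xf_lo; try lra.
    split; [ring | by []].
  + have -> : yR u + 1 * (yR v - yR u) = yR v by ring.
    rewrite Xf_hi; try lra.
    split; [ring | by []].
  + move=> s t Hs Hst Ht1; nra.
- move=> u v u' v' s t Euv Euv' Hne Hs0 Hs1 Ht0 Ht1 HX HY.
  have [Hc [Htl [Hhd Hor]]] := chld_spec Euv.
  have [Hc' [Htl' [Hhd' Hor']]] := chld_spec Euv'.
  have Hsp := span_pos Hc; rewrite Htl Hhd in Hsp.
  have Hsp' := span_pos Hc'; rewrite Htl' Hhd' in Hsp'.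
  have Hcc : chld u v <> chld u' v'.
    move=> H; apply: Hne; have := congr1 tl H; have := congr1 hd H.
    by rewrite Htl Hhd Htl' Hhd' => -> ->.
  have Hon : onC (chld u v) (cxd u v s) (cyd u v s).
    rewrite /onC Htl Hhd /cxd /cyd; split => //; nra.
  have Hon' : onC (chld u' v') (cxd u v s) (cyd u v s).
    rewrite HX HY /onC Htl' Hhd' /cxd /cyd; split => //; nra.
  have Hw : exists w, (w = chld u v \/ w = par (chld u v)) /\
      (w = chld u' v' \/ w = par (chld u' v')) /\ cxd u v s = XX w /\ cyd u v s = yR w.
    case: (leqP (depth (par (chld u v))) (depth (par (chld u' v')))) => Hd.
    + exact: cross_main Hc Hc' Hcc Hd Hon Hon'.
    + have [w [W1 [W2 W3]]] := cross_main Hc' Hc (fun H => Hcc (esym H)) (ltnW Hd) Hon' Hon.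
      by exists w.
  have [w [W1 [W2 [W3 W4]]]] := Hw.
  exists w; split; last split; last split => //.
  + case: Hor => [[E1 E2]|[E1 E2]]; case: W1 => W1; [left|right|right|left]; congruence.
  + case: Hor' => [[E1 E2]|[E1 E2]]; case: W2 => W2; [left|right|right|left]; congruence.
Qed.

Lemma span_ok : span_at_most E yZ (Z.of_nat ((graph_degree E)./2 + 1)).
Proof.
move=> u v Euv; have := edge_span Euv.
rewrite /yR /KR /Kn INR_IZR_INZ -minus_IZR => H.
by apply: le_IZR.
Qed.

End Tree.


Theorem mainTheorem8 (V : finType) (E : rel V) :
  directed_tree E -> longest_path_is_one E ->
  exists (y : V -> Z) (px : V -> R) (cx cy : V -> V -> R -> R),
    upward_planar_layered_drawing E y px cx cy /\
    span_at_most E y (Z.of_nat ((graph_degree E)./2 + 1)).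
Proof.
move=> Ht Hl.
have Hl' := Hl; case: Hl' => [[u0 [v0 Euv]] Hno].
have Hroot : forall u, ~~ E v0 u by move=> u; apply/negP => H; exact: Hno u0 v0 u Euv H.
exists (yZ Ht v0), (XX Ht v0), (cxd Ht v0), (cyd Ht v0).
split; [exact: (drawing_ok Ht Hl Hroot) | exact: (@span_ok _ _ Ht Hl v0 Hroot)].
Qed.
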